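(* Let $(X,\mu)$ be a standard probability space and let $T,U$ be measure-preserving Borel bijections of $(X,\mu)$ with disjoint supports. Suppose there are relatively prime integers $p,q\geq 2$ such that every $T$-orbit is finite with cardinality dividing a power of $p$, and every $U$-orbit is finite with cardinality dividing a power of $q$. Then both $T$ and $U$ belong to the closure, for the uniform topology, of the group generated by $TU$.
   Context: The support of $T$ is $\{x:T(x)\neq x\}$. The uniform topology on the group of measure-preserving bijections of $(X,\mu)$ (identified up to null sets) is given by the metric $d_u(T,U)=\mu(\{x:T(x)\neq U(x)\})$. *)

(* Defs.v *)
From HB Require Import structures.
From mathcomp Require Import all_boot all_order all_algebra.
From mathcomp Require Import all_classical all_reals all_analysis.
Set Implicit Arguments. Unset Strict Implicit. Unset Printing Implicit Defensive.
Import Order.TTheory GRing.Theory Num.Theory.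
Local Open Scope classical_set_scope.
Local Open Scope ring_scope.

(* Standard Borel space: Borel-isomorphic to a Borel subset of R
   (Kuratowski: every standard Borel space is such, and conversely). *)
Definition standard_borel (d : measure_display) (X : measurableType d)
    (R : realType) : Prop :=
  exists f : X -> R,
    [/\ injective f, measurable_fun setT f, measurable (range f)
      & forall A : set X, measurable A -> measurable (f @` A)].

Definition mp_bijection (d : measure_display) (X : measurableType d)
    (R : realType) (mu : probability X R) (T : X -> X) : Prop :=
  [/\ bijective T, measurable_fun setT T
    & forall A : set X, measurable A -> mu (T @^-1` A) = mu A].

Definition supp {X : Type} (T : X -> X) : set X := [set x | T x <> x].

(* the (Z-)orbit of x under a bijection T *)
Definition orbit {X : Type} (T : X -> X) (x : X) : set X :=
  [set y | exists n : nat, y = iter n T x \/ x = iter n T y].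

Definition orbits_pfinite {X : Type} (T : X -> X) (p : nat) : Prop :=
  forall x, exists k m : nat, (orbit T x #= `I_k)%card /\ (k %| p ^ m)%N.

(* the cyclic group generated by f : its elements f^n and f^{-n}
   (the latter characterized as the W with W o f^n = id) *)
Definition cyclic_gen {X : Type} (f : X -> X) : set (X -> X) :=
  [set W | exists n : nat, W = iter n f \/ W \o iter n f = id].

(* V lies in the closure of the set S of transformations for the
   uniform metric d_u(V,W) = mu {x | V x <> W x} *)
Definition in_uniform_closure (d : measure_display) (X : measurableType d)
    (R : realType) (mu : probability X R) (S : set (X -> X)) (V : X -> X) :=
  forall e : R, 0 < e ->
    exists W, S W /\ (mu [set x | V x <> W x] < e%:E)%E.

(* Main.v *)
Require Import Defs.
From HB Require Import structures.
From mathcomp Require Import all_boot all_order all_algebra.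
From mathcomp Require Import all_classical all_reals all_analysis.
Import Order.TTheory GRing.Theory Num.Theory.
Local Open Scope classical_set_scope.
Local Open Scope ring_scope.

Section It.
Variables (X : Type) (f : X -> X).

Lemma iter_mulN {x N} k : iter N f x = x -> iter (k * N) f x = x.
Proof. move=> h; elim: k => [//|k IH]; by rewrite mulSn iterD IH h. Qed.

Lemma iter_dvd {x N a} : (N %| a)%N -> iter N f x = x -> iter a f x = x.
Proof. by move=> /dvdnP[k ->]; apply: iter_mulN. Qed.

Lemma iter_mod x N a : iter N f x = x -> iter a f x = iter (a %% N) f x.
Proof. by move=> h; rewrite {1}(divn_eq a N) addnC iterD iter_mulN. Qed.

Lemma iter_comm x a b : iter a f (iter b f x) = iter b f (iter a f x).
Proof. by rewrite -!iterD addnC. Qed.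

Lemma iter_inj n : injective f -> injective (iter n f).
Proof. move=> fi; elim: n => [//|n IH] a b /= /fi; exact: IH. Qed.

Lemma iter_sub {x i j} : injective f -> (i <= j)%N -> iter i f x = iter j f x ->
  iter (j - i) f x = x.
Proof.
move=> fi ij h; apply: (iter_inj i fi).
by rewrite -iterD addnC subnK.
Qed.

Lemma period_exists {x k} : injective f -> (Defs.orbit f x #= `I_k)%card ->
  exists j, (0 < j)%N /\ iter j f x = x.
Proof.
move=> fi ho; apply: contrapT => hn.
have inj : {in `I_k.+1 &, injective (fun r => iter r f x)}.
  move=> i j _ _ h.
  have H : forall a b, (a < b)%N -> iter a f x = iter b f x -> False.
    move=> a b ab hab; apply: hn; exists (b - a)%N; split; first by rewrite subn_gt0.
    exact: iter_sub (ltnW ab) hab.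
  case: (ltngtP i j) => // ij; [exact: (False_ind _ (H _ _ ij h))|exact: (False_ind _ (H _ _ ij (esym h)))].
have h1 : ((fun r => iter r f x) @` `I_k.+1 #= `I_k.+1)%card := inj_card_eq inj.
have h2 : ((fun r => iter r f x) @` `I_k.+1 `<=` Defs.orbit f x).
  by move=> y [r _ <-]; exists r; left.
have : (`I_k.+1 #<= `I_k)%card.
  apply: card_le_trans (card_le_trans (subset_card_le h2) _).
    by rewrite -(card_le_eql h1) card_lexx.
  by rewrite (card_le_eql ho) card_lexx.
by rewrite card_le_II ltnn.
Qed.

Lemma period_div {x k} p m : injective f -> (Defs.orbit f x #= `I_k)%card ->
  (k %| p ^ m)%N -> iter (p ^ m) f x = x.
Proof.
move=> fi ho kd.
have [j1 [j0 hj]] := period_exists fi ho.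
pose P := fun j => `[< (0 < j)%N /\ iter j f x = x >].
have exP : exists j, P j by exists j1; apply/asboolP.
case: (ex_minnP exP) => l /asboolP [l0 hl] lmin.
have orbE : Defs.orbit f x = (fun r => iter r f x) @` `I_l.
  apply/seteqP; split => y.
  - case=> n [->|hx].
      by exists (n %% l)%N; [rewrite /= ltn_pmod|rewrite -iter_mod].
    have hy : iter l f y = y.
      apply: (iter_inj n fi); by rewrite iter_comm -hx.
    case: l l0 hl lmin hy {exP} => // l' _ hl lmin hy.
    exists ((l' * n) %% l'.+1)%N; first by rewrite /= ltn_pmod.
    rewrite -iter_mod // hx -iterD -mulSnr.
    by rewrite mulnC iter_mulN.
  - by case=> r _ <-; exists r; left.
have inj : {in `I_l &, injective (fun r => iter r f x)}.
  move=> i j; rewrite !inE /= => il jl h.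
  have H : forall a b, (a < b)%N -> (b < l)%N -> iter a f x = iter b f x -> False.
    move=> a b ab bl hab.
    have : (l <= b - a)%N.
      apply: lmin; apply/asboolP; split; first by rewrite subn_gt0.
      exact: iter_sub (ltnW ab) hab.
    by move=> /leq_trans/(_ (leq_subr a b)); rewrite leqNgt bl.
  case: (ltngtP i j) => // ij; [exact: (False_ind _ (H _ _ ij jl h))|exact: (False_ind _ (H _ _ ij il (esym h)))].
have : (`I_l #= `I_k)%card.
  apply: card_eq_trans ho; rewrite orbE card_eq_sym; exact: inj_card_eq.
move=> /card_eq_II lk.
apply: (iter_dvd kd); by rewrite -lk.
Qed.

End It.

Section Dyn.
Variables (X : Type) (T U : X -> X).
Hypotheses (Ti : injective T) (Ui : injective U)
  (disj : supp T `&` supp U = set0).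

Lemma hd {x} : T x <> x -> U x = x.
Proof.
move=> h; apply: contrapT => h'.
have : (supp T `&` supp U) x by [].
by rewrite disj.
Qed.

Lemma hd' {x} : U x <> x -> T x = x.
Proof. move=> h; apply: contrapT => h'; exact: h (hd h'). Qed.

Lemma L1 x n : T x <> x -> iter n (T \o U) x = iter n T x.
Proof.
move=> h.
have s : forall m, T (iter m T x) <> iter m T x.
  elim=> [|m IH] /=; first exact: h.
  move=> e; apply: IH; exact: Ti _ _ e.
elim: n => [//|n IH] /=; by rewrite IH hd.
Qed.

Lemma L2 x n : T x = x -> iter n (T \o U) x = iter n U x.
Proof.
move=> h.
have Q : forall y, T y = y -> T (U y) = U y.
  move=> y ty; have [e|ne] := pselect (U y = y); first by rewrite e.
  apply: hd' => e; exact: ne (Ui _ _ e).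
have s : forall m, T (iter m U x) = iter m U x.
  elim=> [//|m IH] /=; exact: Q.
elim: n => [//|n IH] /=; by rewrite IH -[U _]/(iter n.+1 U x) s.
Qed.

End Dyn.

Lemma meas_iter (d : measure_display) (X : measurableType d) (f : X -> X) n :
  measurable_fun setT f -> measurable_fun setT (iter n f).
Proof.
move=> mf; elim: n => [|n IH]; first exact: measurable_id.
exact: (measurableT_comp mf IH).
Qed.

Lemma meas_eq (d : measure_display) (X : measurableType d) (R : realType)
  (g h : X -> X) : standard_borel X R ->
  measurable_fun setT g -> measurable_fun setT h ->
  measurable [set x | g x = h x].
Proof.
move=> [f [fi mf _ _]] mg mh.
have mfg : measurable_fun setT ((f \o g) \- (f \o h)).
  by apply: measurable_realfun.measurable_funB; apply: measurableT_comp.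
have -> : [set x | g x = h x] = setT `&` ((f \o g) \- (f \o h)) @^-1` [set 0].
  apply/seteqP; split => x /=.
  - by move=> ->; split => //; rewrite subrr.
  - by move=> [_ /eqP]; rewrite subr_eq0 => /eqP /fi.
exact: mfg.
Qed.

Theorem lemma6p1 (d : measure_display) (X : measurableType d) (R : realType)
  (mu : probability X R) (T U : X -> X) (p q : nat) :
  standard_borel X R ->
  mp_bijection mu T -> mp_bijection mu U ->
  supp T `&` supp U = set0 ->
  (2 <= p)%N -> (2 <= q)%N -> coprime p q ->
  orbits_pfinite T p -> orbits_pfinite U q ->
  in_uniform_closure mu (cyclic_gen (T \o U)) T /\
  in_uniform_closure mu (cyclic_gen (T \o U)) U.
Proof.
move=> sb [/bij_inj Ti mT _] [/bij_inj Ui mU _] disj p2 q2 cpq oT oU.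
pose F M := [set x | iter (p ^ M) T x = x] `&` [set x | iter (q ^ M) U x = x].
have mF M : measurable (F M).
  apply: measurableI; apply: (meas_eq _ _ _ _ _ sb); (try exact: meas_iter); exact: measurable_id.
pose B M := ~` F M.
have mB M : measurable (B M) by apply: measurableC.
have cvB : (mu \o B) @ \oo --> mu (\bigcap_n B n).
  apply: nonincreasing_cvg_mu => //.
  - by rewrite (le_lt_trans (probability_le1 _ _)) ?ltry.
  - exact: bigcap_measurable.
  - move=> m n mn; apply/subsetPset => x; rewrite /B; apply: contra_not.
    move=> [h1 h2]; split.
    + exact: iter_dvd _ _ (dvdn_exp2l _ mn) h1.
    + exact: iter_dvd _ _ (dvdn_exp2l _ mn) h2.
have B0 : \bigcap_n B n = set0.
  apply/seteqP; split => // x /= hx.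
  have [k1 [m1 [or1 dv1]]] := oT x.
  have [k2 [m2 [or2 dv2]]] := oU x.
  have h1 := period_div _ _ _ _ Ti or1 dv1.
  have h2 := period_div _ _ _ _ Ui or2 dv2.
  apply: (hx (maxn m1 m2) I); split.
  + exact: iter_dvd _ _ (dvdn_exp2l _ (leq_maxl m1 m2)) h1.
  + exact: iter_dvd _ _ (dvdn_exp2l _ (leq_maxr m1 m2)) h2.
rewrite B0 measure0 in cvB.
have small : forall e : R, 0 < e -> exists M, (mu (B M) < e%:E)%E.
  move=> e e0.
  have nb : nbhs (0:R)%:E [set y : \bar R | (y < e%:E)%E].
    apply/nbhs_EFin; by apply: lt_nbhsl; rewrite e0.
  have := cvB _ nb. rewrite /=. move=> H0. case: H0 => N _ HN.
  by exists N; apply: (HN N (leqnn N)).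
have key : forall (V : X -> X) n M, measurable_fun setT V ->
   (forall x, F M x -> V x = iter n (T \o U) x) ->
   (mu [set x | V x <> iter n (T \o U) x] <= mu (B M))%E.
  move=> V n M mV hV; apply: le_measure; rewrite ?inE //.
  - apply: measurableC; apply: (meas_eq _ _ _ _ _ sb) => //.
    by apply: meas_iter; apply: measurableT_comp.
  - by move=> x /= hx hF; apply: hx; exact: hV.
have cop M : coprime (p ^ M) (q ^ M) by apply: coprimeXl; apply: coprimeXr.
split=> e e0; have [M hM] := small e e0.
- exists (iter (chinese (p ^ M) (q ^ M) 1 0) (T \o U)); split.
    by exists (chinese (p ^ M) (q ^ M) 1 0); left.
  apply: le_lt_trans hM; apply: key => // x [/= h1 h2].
  have [e1|ne] := pselect (T x = x).
  + rewrite (L2 _ _ _ Ui disj _ _ e1) (iter_mod _ _ _ _ _ h2) (chinese_modr (cop M)) mod0n /=.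
    exact: e1.
  + rewrite (L1 _ _ _ Ti disj _ _ ne) (iter_mod _ _ _ _ _ h1) (chinese_modl (cop M)).
    by rewrite -(iter_mod _ _ _ _ 1 h1).
- exists (iter (chinese (p ^ M) (q ^ M) 0 1) (T \o U)); split.
    by exists (chinese (p ^ M) (q ^ M) 0 1); left.
  apply: le_lt_trans hM; apply: key => // x [/= h1 h2].
  have [e1|ne] := pselect (T x = x).
  + rewrite (L2 _ _ _ Ui disj _ _ e1) (iter_mod _ _ _ _ _ h2) (chinese_modr (cop M)).
    by rewrite -(iter_mod _ _ _ _ 1 h2).
  + rewrite (L1 _ _ _ Ti disj _ _ ne) (iter_mod _ _ _ _ _ h1) (chinese_modl (cop M)) mod0n /=.
    exact: (hd _ _ _ disj ne).
Qed.
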